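(* Let $d\ge2$ and let $R=(r_{ij})$ be a real $d\times d$ matrix with $r_{ii}=1$ for all $i$. Assume $R$ is not an $\mathcal S$-matrix and every principal sub-matrix of $R$ other than $R$ itself is completely-$\mathcal S$. Then for every $i\in\{1,\dots,d\}$ there exists $j\neq i$ with $r_{ij}\neq0$.
   Context: $x>0$ (resp. $x\ge0$) means all entries positive (resp. non-negative). A square matrix $M$ is an $\mathcal S$-matrix if there exists a vector $x\ge0$ with $Mx>0$; it is completely-$\mathcal S$ if all its principal sub-matrices (sub-matrices $(m_{ij})_{i,j\in I}$ for non-empty index sets $I$, including the full set) are $\mathcal S$-matrices. *)

(* Defs.v *)
From mathcomp Require Import all_boot all_order all_algebra.
From mathcomp Require Import reals.
Set Implicit Arguments. Unset Strict Implicit. Unset Printing Implicit Defensive.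
Import Order.TTheory GRing.Theory Num.Theory.
Local Open Scope ring_scope.

Definition S_matrix (R : realType) (n : nat) (M : 'M[R]_n) : Prop :=
  exists x : 'cV[R]_n,
    (forall i, 0 <= x i ord0) /\ (forall i, 0 < (M *m x) i ord0).

(* principal submatrix of M on index set I (indices listed in increasing order) *)
Definition principal_submx (R : realType) (d : nat) (M : 'M[R]_d)
  (I : {set 'I_d}) : 'M[R]_#|I| :=
  mxsub (fun k => enum_val k) (fun k => enum_val k) M.

Definition completely_S (R : realType) (d : nat) (M : 'M[R]_d) : Prop :=
  forall I : {set 'I_d}, I != set0 -> S_matrix (principal_submx M I).

(* Main.v *)
Require Import Defs.
From mathcomp Require Import all_boot all_order all_algebra.
From mathcomp Require Import reals.
Import Order.TTheory GRing.Theory Num.Theory.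
Local Open Scope ring_scope.

Theorem lemma1 (R : realType) (d : nat) (Rm : 'M[R]_d)
  (hd : (2 <= d)%N)
  (hdiag : forall i, Rm i i = 1)
  (hnotS : ~ S_matrix Rm)
  (hsub : forall I : {set 'I_d}, I != set0 -> I != setT ->
            completely_S (principal_submx Rm I)) :
  forall i : 'I_d, exists j : 'I_d, j != i /\ Rm i j != 0.
Proof.
move=> i.
case: (boolP [exists j, (j != i) && (Rm i j != 0)]) => [/existsP [j /andP[h1 h2]]|hn].
  by exists j.
exfalso; apply: hnotS.
have hz : forall j, j != i -> Rm i j = 0.
  move=> j hj; apply/eqP; apply: contraNT hn => h.
  by apply/existsP; exists j; rewrite hj h.
set I := [set~ i].
have hI0 : I != set0.
  apply/set0Pn; have [j hj] : exists j : 'I_d, j != i.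
    case: (eqVneq i (Ordinal (ltn_trans (ltnSn 0) hd))) => h.
      by exists (Ordinal hd); rewrite h; apply/eqP => -[].
    by exists (Ordinal (ltn_trans (ltnSn 0) hd)); rewrite eq_sym.
  by exists j; rewrite !inE.
have hIT : I != setT.
  by apply/eqP => h; have := in_setT i; rewrite -h !inE eqxx.
have hT0 : [set: 'I_#|I|] != set0.
  apply/set0Pn; case/set0Pn: hI0 => j hj.
  by exists (enum_rank_in hj j); rewrite inE.
have [y [y0 Ay0]] := hsub I hI0 hIT _ hT0.
set A := principal_submx (principal_submx Rm I) setT in Ay0.
pose f (k : 'I_#|[set: 'I_#|I|]|) : 'I_d := enum_val (enum_val k).
have fI : forall k, f k \in I by move=> k; exact: enum_valP.
have Af : forall a b, A a b = Rm (f a) (f b) by move=> a b; rewrite !mxE.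
have fsurj : forall j, j \in I -> exists k, f k = j.
  move=> j hj; have hk : enum_rank_in hj j \in [set: 'I_#|I|] by rewrite inE.
  exists (enum_rank_in hk (enum_rank_in hj j)).
  by rewrite /f !enum_rankK_in.
pose Ay k := (A *m y) k ord0.
pose c : R := 1 + \sum_k `|Rm (f k) i| / Ay k.
pose x : 'cV[R]_d := \col_l (((l == i)%:R + c * \sum_k (f k == l)%:R * y k ord0) : R).
have Ayp : forall k, 0 < Ay k by move=> k; exact: Ay0.
have c0 : 0 <= c.
  apply: addr_ge0 => //; apply: sumr_ge0 => k _; apply: divr_ge0 => //.
  exact: ltW.
exists x; split.
  move=> l; rewrite mxE; apply: addr_ge0; first exact: ler0n.
  apply: mulr_ge0 => //; apply: sumr_ge0 => k _; apply: mulr_ge0; [exact: ler0n | exact: y0].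
have Rx : forall j, (Rm *m x) j ord0 =
    Rm j i + c * \sum_k Rm j (f k) * y k ord0.
  move=> j; rewrite mxE.
  under eq_bigr => l _ do rewrite mxE mulrDr mulrCA.
  rewrite big_split /=; congr (_ + _).
    rewrite (bigD1 i) //= eqxx mulr1 big1 ?addr0 // => l /negbTE ->.
    by rewrite mulr0.
  rewrite -mulr_sumr; congr (_ * _).
  rewrite (eq_bigr (fun l => \sum_k Rm j l * ((f k == l)%:R * y k ord0))); last first.
    by move=> l _; rewrite mulr_sumr.
  rewrite exchange_big /=; apply: eq_bigr => k _.
  rewrite (bigD1 (f k)) //= eqxx mul1r big1 ?addr0 // => l hl.
  by rewrite eq_sym (negbTE hl) mul0r mulr0.
move=> j; rewrite Rx; case: (eqVneq j i) => [->|hji].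
  rewrite hdiag big1 ?mulr0 ?addr0 ?ltr01 // => k _.
  by rewrite hz ?mul0r //; have := fI k; rewrite !inE.
have [k0 hk0] : exists k, f k = j by apply: fsurj; rewrite !inE.
have -> : \sum_k Rm j (f k) * y k ord0 = Ay k0.
  by rewrite /Ay mxE; apply: eq_bigr => k _; rewrite Af hk0.
have h1 : `|Rm j i| <= `|Rm (f k0) i| / Ay k0 * Ay k0.
  by rewrite divfK ?hk0 // gt_eqF.
have h2 : `|Rm (f k0) i| / Ay k0 <= \sum_k `|Rm (f k) i| / Ay k.
  rewrite (bigD1 k0) //= lerDl; apply: sumr_ge0 => k _.
  by apply: divr_ge0 => //; exact: ltW.
have h3 : `|Rm (f k0) i| / Ay k0 * Ay k0 < c * Ay k0.
  rewrite ltr_pM2r //; rewrite /c; apply: (le_lt_trans h2).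
  by rewrite ltrDr ltr01.
have hb := le_lt_trans h1 h3.
move: (Rm j i) (c * Ay k0) hb => a b hb.
rewrite -(opprK a) addrC subr_gt0; apply: le_lt_trans hb.
by rewrite -normrN ler_norm.
Qed.
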